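(* Consider one time step $t^n\to t^{n+1}=t^n+\Delta t$ of the fully discrete semi-implicit discontinuous Galerkin scheme described in the context (periodic boundary conditions), starting from $\vec U_h^n=(\rho_h^n,\vec m_h^n,E_h^n)\in M_h^k\times\mathbf X_h^k\times M_h^k$ and producing $\vec U_h^{n+1}=(\rho_h^{n+1},\vec m_h^{n+1},E_h^{n+1})$. Assume that the intermediate DG solution $\vec U_h^{\mathrm P}$ satisfies $\vec U_h^{\mathrm P}(\vec x_q)\in G$ for all $\vec x_q\in S_h$. Then the scheme conserves density, momentum and total energy: $$(\rho_h^{n},1)=(\rho_h^{n+1},1),\qquad (\vec m_h^{n},\vec 1)=(\vec m_h^{n+1},\vec 1),\qquad (E_h^{n},1)=(E_h^{n+1},1).$$
   Context: Setting. The compressible Navier--Stokes system with conserved variables $\vec U=(\rho,\vec m,E)$, velocity $\vec u=\vec m/\rho$, internal energy $e$ with $E=\rho e+\frac{\|\vec m\|^2}{2\rho}$, ideal gas pressure $p=(\gamma-1)\rho e$ ($\gamma>1$), Reynolds number $\mathrm{Re}>0$, heat parameter $\lambda>0$, strain $\varepsilon(\vec u)=\frac12(\nabla\vec u+\nabla\vec u^T)$. The admissible set is $G=\{(\rho,\vec m,E):\rho>0,\ E-\frac{\|\vec m\|^2}{2\rho}>0\}$ and, for a small $\epsilon>0$, $G^\epsilon=\{(\rho,\vec m,E):\rho\ge\epsilon,\ E-\frac{\|\vec m\|^2}{2\rho}\ge\epsilon\}$. The domain $\Omega\subset\mathbb R^2$ is a rectangle with periodic boundary conditions, partitioned uniformly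 into square cells $K$ (set $\mathcal E_h$) of diameter $h$; $\Gamma_h$ denotes the set of all faces (periodic faces treated as interior). For each face $e$ shared by $K_{i^-},K_{i^+}$ ($i^-<i^+$), $\vec n_e$ points from $K_{i^-}$ to $K_{i^+}$, $\{v\}=\frac12(v|_{K_{i^-}}+v|_{K_{i^+}})$, $[v]=v|_{K_{i^-}}-v|_{K_{i^+}}$. For $k\ge1$, $M_h^k$ (resp. $\mathbf X_h^k$) is the space of scalar (resp. $\mathbb R^2$-valued) functions whose restriction to each cell lies in $\mathbb Q^k$ (polynomials of degree $\le k$ in each variable). $(\cdot,\cdot)$ denotes the $L^2(\Omega)$ inner product evaluated cellwise by the tensor-product $(k+1)$-point Gauss quadrature, and $\langle\cdot,\cdot\rangle$ the one evaluated by the tensor-product $(k+1)$-point Gauss--Lobatto quadrature; all volume and face integrals in the forms below are evaluated by Gauss--Lobatto quadrature. $S_h$ is the union over cells $K$ of the Gauss quadrature points used in the hyperbolic step (volume and face points) together with auxiliary points formed by tensor products of $(k+1)$-point Gauss and $L$-point Gauss--Lobatto points ($2L-3\ge k$) in each direction. Zhang--Shu limiter on a cell $K$ with point set $S_K$ (applied when the cell average $\overline{\vec U}_K\in G^\epsilon$): replace $\rho_K$ by $\hat\rho_K=\theta_\rho(\rho_K-\bar\rho_K)+\bar\rho_K$, $\theta_\rho=\min\{1,\frac{\bar\rho_K-\epsilon}{\bar\rho_K-\min_{S_K}\rho_K}\}$, then replace $\hat{\vec U}_K=(\hat\rho_K,\vec m_K,E_K)$ by $\theta_e(\hat{\vec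 U}_K-\overline{\vec U}_K)+\overline{\vec U}_K$ with $\theta_e=\min\{1,\frac{\overline{\rho e}_K-\epsilon}{\overline{\rho e}_K-\min_{S_K}\rho e_K}\}$, where $\overline{\rho e}_K=\bar E_K-\frac{\|\bar{\vec m}_K\|^2}{2\bar\rho_K}$ and $\rho e_K=E_K-\frac{\|\vec m_K\|^2}{2\hat\rho_K}$ pointwise. Hyperbolic step (H) over time $\Delta t/2$ (possibly in several substeps whose sizes sum to $\Delta t/2$): the semi-discrete DG method $\frac{d}{dt}(\vec U_h,\varPsi_h)_K=(\vec F^a(\vec U_h),\nabla\varPsi_h)_K-\int_{\partial K}\widehat{\vec F^a\cdot\vec n_K}\,\varPsi_h$ for all $\varPsi_h\in\mathbb Q^k(K)$, with Euler flux $\vec F^a=(\rho\vec u,\rho\vec u\otimes\vec u+p\mathbf I,(E+p)\vec u)$ and local Lax--Friedrichs flux $\widehat{\vec F^a\cdot\vec n_K}=\frac12(\vec F^a(\vec U^-)+\vec F^a(\vec U^+))\cdot\vec n_K-\frac{\alpha_e}{2}(\vec U^+-\vec U^-)$ ($\alpha_e$ the maximal wave speed on face $e$), discretized in time by the third-order SSP Runge--Kutta method $\vec U^{(1)}=\vec U^n+\tau L(\vec U^n)$, $\vec U^{(2)}=\frac34\vec U^n+\frac14(\vec U^{(1)}+\tau L(\vec U^{(1)}))$, $\vec U^{\text{new}}=\frac13\vec U^n+\frac23(\vec U^{(2)}+\tau L(\vec U^{(2)}))$, with the Zhang--Shu limiter on $S_h$ after each stage. One time step: (1) from $\vec U_h^n$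 compute $\vec U_h^{\mathrm H}$ by step (H). (2) Apply the Zhang--Shu limiter at the Gauss--Lobatto points; compute $(\vec u_h^{\mathrm H},e_h^{\mathrm H})\in\mathbf X_h^k\times M_h^k$ by $\langle\vec m_h^{\mathrm H},\vec\theta_h\rangle=\langle\rho_h^{\mathrm H}\vec u_h^{\mathrm H},\vec\theta_h\rangle$ and $\langle E_h^{\mathrm H},\chi_h\rangle=\langle\rho_h^{\mathrm H}e_h^{\mathrm H},\chi_h\rangle+\langle\frac{\vec m_h^{\mathrm H}}{2\rho_h^{\mathrm H}},\vec m_h^{\mathrm H}\chi_h\rangle$ for all $\vec\theta_h,\chi_h$. (3) With parameters $\vartheta\in(0,1]$, $\sigma\ge0$, $\tilde\sigma>0$, set $\rho_h^{\mathrm P}=\rho_h^{\mathrm H}$, find $\vec u_h^*\in\mathbf X_h^k$ with $\langle\rho_h^{\mathrm P}\vec u_h^*,\vec\theta_h\rangle+\frac{\Delta t}{2\mathrm{Re}}a_\varepsilon(\vec u_h^*,\vec\theta_h)+\frac{\Delta t}{3\mathrm{Re}}a_\lambda(\vec u_h^*,\vec\theta_h)=\langle\rho_h^{\mathrm H}\vec u_h^{\mathrm H},\vec\theta_h\rangle$ for all $\vec\theta_h\in\mathbf X_h^k$, set $\vec u_h^{\mathrm P}=2\vec u_h^*-\vec u_h^{\mathrm H}$; then find $e_h^*\in M_h^k$ with $\langle\rho_h^{\mathrm P}e_h^*,\chi_h\rangle+\frac{\vartheta\Delta t\lambda}{\mathrm{Re}}a_{\mathcal D}(e_h^*,\chi_h)=\langle\rho_h^{\mathrm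 H}e_h^{\mathrm H},\chi_h\rangle+\frac{\vartheta\Delta t}{\mathrm{Re}}b_\varepsilon(\vec u_h^*,\chi_h)+\frac{2\vartheta\Delta t}{3\mathrm{Re}}b_\lambda(\vec u_h^*,\chi_h)$ for all $\chi_h\in M_h^k$, and set $e_h^{\mathrm P}=\frac1\vartheta e_h^*+(1-\frac1\vartheta)e_h^{\mathrm H}$. Here $a_\varepsilon(\vec u,\vec\theta)=2\sum_K\int_K\varepsilon(\vec u):\varepsilon(\vec\theta)-2\sum_{e\in\Gamma_h}\int_e\{\varepsilon(\vec u)\vec n_e\}\cdot[\vec\theta]+2\sum_{e\in\Gamma_h}\int_e\{\varepsilon(\vec\theta)\vec n_e\}\cdot[\vec u]+\frac\sigma h\sum_{e\in\Gamma_h}\int_e[\vec u]\cdot[\vec\theta]$, $a_\lambda(\vec u,\vec\theta)=-\sum_K\int_K(\nabla\!\cdot\!\vec u)(\nabla\!\cdot\!\vec\theta)+\sum_{e\in\Gamma_h}\int_e\{\nabla\!\cdot\!\vec u\}[\vec\theta\cdot\vec n_e]-\sum_{e\in\Gamma_h}\int_e\{\nabla\!\cdot\!\vec\theta\}[\vec u\cdot\vec n_e]$, $a_{\mathcal D}(e,\chi)=\sum_K\int_K\nabla e\cdot\nabla\chi-\sum_{e'\in\Gamma_h}\int_{e'}\{\nabla e\cdot\vec n_{e'}\}[\chi]+\frac{\tilde\sigma}h\sum_{e'\in\Gamma_h}\int_{e'}[e][\chi]$, $b_\varepsilon(\vec u,\chi)=2\sum_K\int_K\varepsilon(\vec u):\varepsilon(\vec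 u)\chi+\frac\sigma h\sum_{e\in\Gamma_h}\int_e[\vec u]\cdot[\vec u]\{\chi\}$, $b_\lambda(\vec u,\chi)=-\sum_K\int_K(\nabla\!\cdot\!\vec u)^2\chi$. (4) Compute $(\vec m_h^{\mathrm P},E_h^{\mathrm P})$ by $\langle\vec m_h^{\mathrm P},\vec\theta_h\rangle=\langle\rho_h^{\mathrm P}\vec u_h^{\mathrm P},\vec\theta_h\rangle$, $\langle E_h^{\mathrm P},\chi_h\rangle=\langle\rho_h^{\mathrm P}e_h^{\mathrm P},\chi_h\rangle+\langle\frac{\vec m_h^{\mathrm P}}{2\rho_h^{\mathrm P}},\vec m_h^{\mathrm P}\chi_h\rangle$; if some cell average lies outside $G^\epsilon$, the total energy on each cell $K_i$ of an index set $T$ is shifted by a constant, $E_i\mapsto E_i-\bar E_i+\bar E_i^*$, where $(\bar E_i^* )_{i\in T}$ minimizes $\sum_{i\in T}|\bar E_i^*-\bar E_i|^2$ subject to $\sum_{i\in T}\bar E_i^*|K_i|=\sum_{i\in T}\bar E_i|K_i|$ and $(\bar\rho_i,\bar{\vec m}_i,\bar E_i^* )\in G^\epsilon$; then the Zhang--Shu limiter is applied on $S_h$; the result is $\vec U_h^{\mathrm P}$. (5) From $\vec U_h^{\mathrm P}$ compute $\vec U_h^{n+1}$ by step (H). All steps are assumed well defined (linear systems uniquely solvable, densities positive where divided by). *)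

(* Defs.v *)
(* Algebraic statement over an arbitrary real closed field R
   (the real numbers are an instance). *)
From HB Require Import structures.
From mathcomp Require Import all_boot all_order all_algebra.
Set Implicit Arguments. Unset Strict Implicit. Unset Printing Implicit Defensive.
Import Order.TTheory GRing.Theory Num.Theory.
Local Open Scope ring_scope.

(* Domain: the rectangle [0, Nx*dx] x [0, Ny*dx], periodic, partitioned into *)
(* Nx*Ny square cells K_(i,j) = [i dx,(i+1)dx] x [j dx,(j+1)dx] of side dx.  *)
(* A function of Q^k(K) is stored by its coefficients in the monomial basis  *)
(* xi^a eta^b (0 <= a,b <= k) of the reference coordinates (xi,eta) in       *)
(* [-1,1]^2, x = (i+1/2)dx + xi dx/2, y = (j+1/2)dx + eta dx/2.              *)
(* gx/gw: (k+1)-point Gauss rule on [-1,1]; lx/lw: (k+1)-point Gauss-Lobatto *)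
(* rule; ax/aw: La-point Gauss-Lobatto rule (auxiliary points of S_h).        *)
Record disc (R : rcfType) := Disc {
  kd : nat;          (* polynomial degree k *)
  Nx : nat; Ny : nat; (* number of cells in x and y *)
  dx : R;            (* side length of the square cells *)
  hd : R;            (* the mesh parameter h = diameter of a cell *)
  La : nat;          (* number L of auxiliary Gauss-Lobatto points *)
  gx : 'I_kd.+1 -> R; gw : 'I_kd.+1 -> R;
  lx : 'I_kd.+1 -> R; lw : 'I_kd.+1 -> R;
  ax : 'I_La -> R;    aw : 'I_La -> R }.
Arguments gx {R} d _. Arguments gw {R} d _. Arguments lx {R} d _.
Arguments lw {R} d _. Arguments ax {R} d _. Arguments aw {R} d _.

(* Physical / scheme parameters: gamma, Re, lambda, epsilon, vartheta,
   sigma, tilde sigma. *)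
Record phys (R : rcfType) := Phys {
  gam : R; reyn : R; lamh : R; epsl : R; vth : R; sig : R; sigt : R }.

(* integral of xi^m over [-1,1] *)
Definition mono_int (R : rcfType) (m : nat) : R :=
  if odd m then 0 else 2 / (m.+1)%:R.

(* the n-point Gauss rule: n distinct nodes in (-1,1), exact for degree <= 2n-1
   (this characterises it uniquely) *)
Definition gauss_rule (R : rcfType) (n : nat) (x w : 'I_n -> R) : Prop :=
  injective x /\ (forall i, -1 < x i < 1) /\
  forall m, (m < 2 * n)%N -> \sum_(i < n) w i * x i ^+ m = mono_int R m.

(* the n-point Gauss-Lobatto rule: n distinct nodes in [-1,1] including both
   endpoints, exact for degree <= 2n-3 (characterises it uniquely, n >= 2) *)
Definition gl_rule (R : rcfType) (n : nat) (x w : 'I_n -> R) : Prop :=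
  injective x /\ (forall i, -1 <= x i <= 1) /\
  (exists i, x i = -1) /\ (exists i, x i = 1) /\
  forall m, (m <= 2 * n - 3)%N -> \sum_(i < n) w i * x i ^+ m = mono_int R m.

Definition c0 : 'I_4 := @Ordinal 4 0 isT.  (* density rho *)
Definition c1 : 'I_4 := @Ordinal 4 1 isT.  (* momentum m_1 *)
Definition c2 : 'I_4 := @Ordinal 4 2 isT.  (* momentum m_2 *)
Definition c3 : 'I_4 := @Ordinal 4 3 isT.  (* total energy E *)

Section Scheme.
Context (R : rcfType) (D : disc R) (P : phys R).

Local Notation k := (kd D).
Local Notation cell := ('I_(Nx D) * 'I_(Ny D))%type.

Definition Qk := 'I_k.+1 -> 'I_k.+1 -> R.
(* a scalar DG function in M_h^k *)
Definition SF := 'I_(Nx D) -> 'I_(Ny D) -> Qk.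
(* a vector DG function in X_h^k *)
Definition VF := (SF * SF)%type.
(* a DG state U_h = (rho, m_1, m_2, E) in M_h^k x X_h^k x M_h^k *)
Definition State := 'I_4 -> SF.

Definition evalQ (q : Qk) (xi eta : R) : R :=
  \sum_(a < k.+1) \sum_(b < k.+1) q a b * xi ^+ a * eta ^+ b.
Definition dxiQ (q : Qk) (xi eta : R) : R :=
  \sum_(a < k.+1) \sum_(b < k.+1) q a b * (a : nat)%:R * xi ^+ a.-1 * eta ^+ b.
Definition detaQ (q : Qk) (xi eta : R) : R :=
  \sum_(a < k.+1) \sum_(b < k.+1) q a b * (b : nat)%:R * xi ^+ a * eta ^+ b.-1.

Definition cstQ (v : R) : Qk := fun a b => if (a == ord0) && (b == ord0) then v else 0.
Definition shiftQ (th : R) (q : Qk) (v : R) : Qk :=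
  fun a b => th * q a b + cstQ ((1 - th) * v) a b.

Definition oneF : SF := fun _ _ => cstQ 1.

Definition combF (al : R) (f : SF) (be : R) (g : SF) : SF :=
  fun i j a b => al * f i j a b + be * g i j a b.
Definition combS (al : R) (U : State) (be : R) (V : State) : State :=
  fun c => combF al (U c) be (V c).

(* a point of a cell given in reference coordinates *)
Record pt := Pt { pi : 'I_(Nx D); pj : 'I_(Ny D); px : R; py : R }.
Definition evp (f : SF) (p : pt) : R := evalQ (f (pi p) (pj p)) (px p) (py p).
(* physical derivatives d/dx, d/dy *)
Definition dXp (f : SF) (p : pt) : R := 2 / dx D * dxiQ (f (pi p) (pj p)) (px p) (py p).
Definition dYp (f : SF) (p : pt) : R := 2 / dx D * detaQ (f (pi p) (pj p)) (px p) (py p).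
Definition Uval (U : State) (p : pt) : 'I_4 -> R := fun c => evp (U c) p.

Definition volG (Phi : pt -> R) : R :=
  \sum_(i < Nx D) \sum_(j < Ny D) \sum_(a < k.+1) \sum_(b < k.+1)
     gw D a * gw D b * (dx D / 2) ^+ 2 * Phi (Pt i j (gx D a) (gx D b)).
Definition volGL (Phi : pt -> R) : R :=
  \sum_(i < Nx D) \sum_(j < Ny D) \sum_(a < k.+1) \sum_(b < k.+1)
     lw D a * lw D b * (dx D / 2) ^+ 2 * Phi (Pt i j (lx D a) (lx D b)).

(* (f, g) : L^2 inner product by Gauss quadrature *)
Definition ipG (f g : SF) : R := volG (fun p => evp f p * evp g p).
(* <f, g> : L^2 inner product by Gauss-Lobatto quadrature *)
Definition ipGL (f g : SF) : R := volGL (fun p => evp f p * evp g p).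
Definition ipGL3 (r f g : SF) : R := volGL (fun p => evp r p * evp f p * evp g p).
Definition vipGL (u th : VF) : R := ipGL u.1 th.1 + ipGL u.2 th.2.
Definition vipGL3 (r : SF) (u th : VF) : R := ipGL3 r u.1 th.1 + ipGL3 r u.2 th.2.
Definition kinGL (r : SF) (m : VF) (chi : SF) : R :=
  volGL (fun p => evp m.1 p / (2 * evp r p) * (evp m.1 p * evp chi p)
                + evp m.2 p / (2 * evp r p) * (evp m.2 p * evp chi p)).

(* The integrand
   Phi n1 n2 pm pp receives the normal n_e = (n1,n2) and the traces points
   pm (in K^-) and pp (in K^+).  Each face is listed once: the vertical face
   between K_(i,j) and K_(i+1 mod Nx, j) with n_e = (1,0), and the horizontal
   face between K_(i,j) and K_(i, j+1 mod Ny) with n_e = (0,1). *)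
Definition facesGL (Phi : R -> R -> pt -> pt -> R) : R :=
  \sum_(i < Nx D) \sum_(j < Ny D) \sum_(b < k.+1) lw D b * (dx D / 2) *
    (Phi 1 0 (Pt i j 1 (lx D b)) (Pt (ordS i) j (-1) (lx D b)) +
     Phi 0 1 (Pt i j (lx D b) 1) (Pt i (ordS j) (lx D b) (-1))).

Definition dot2 (a b : R * R) : R := a.1 * b.1 + a.2 * b.2.
Definition avgf (g : pt -> R) (pm pp : pt) : R := (g pm + g pp) / 2.
Definition jump (g : pt -> R) (pm pp : pt) : R := g pm - g pp.
Definition avgv (g : pt -> R * R) (pm pp : pt) : R * R :=
  (((g pm).1 + (g pp).1) / 2, ((g pm).2 + (g pp).2) / 2).
Definition vjump (u : VF) (pm pp : pt) : R * R :=
  (jump (evp u.1) pm pp, jump (evp u.2) pm pp).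

(* strain eps(u) = (grad u + grad u^T)/2 *)
Definition e11 (u : VF) (p : pt) : R := dXp u.1 p.
Definition e22 (u : VF) (p : pt) : R := dYp u.2 p.
Definition e12 (u : VF) (p : pt) : R := (dYp u.1 p + dXp u.2 p) / 2.
Definition epsdot (u v : VF) (p : pt) : R :=
  e11 u p * e11 v p + e22 u p * e22 v p + 2 * (e12 u p * e12 v p).
Definition epsn (u : VF) (n1 n2 : R) (p : pt) : R * R :=
  (e11 u p * n1 + e12 u p * n2, e12 u p * n1 + e22 u p * n2).
Definition divu (u : VF) (p : pt) : R := dXp u.1 p + dYp u.2 p.
Definition dotn (u : VF) (n1 n2 : R) (p : pt) : R := evp u.1 p * n1 + evp u.2 p * n2.

Definition a_eps (u th : VF) : R :=
  2 * volGL (epsdot u th)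
  - 2 * facesGL (fun n1 n2 pm pp => dot2 (avgv (epsn u n1 n2) pm pp) (vjump th pm pp))
  + 2 * facesGL (fun n1 n2 pm pp => dot2 (avgv (epsn th n1 n2) pm pp) (vjump u pm pp))
  + sig P / hd D * facesGL (fun _ _ pm pp => dot2 (vjump u pm pp) (vjump th pm pp)).

Definition a_lam (u th : VF) : R :=
  - volGL (fun p => divu u p * divu th p)
  + facesGL (fun n1 n2 pm pp => avgf (divu u) pm pp * jump (dotn th n1 n2) pm pp)
  - facesGL (fun n1 n2 pm pp => avgf (divu th) pm pp * jump (dotn u n1 n2) pm pp).

Definition a_D (e chi : SF) : R :=
  volGL (fun p => dXp e p * dXp chi p + dYp e p * dYp chi p)
  - facesGL (fun n1 n2 pm pp =>
       avgf (fun p => dXp e p * n1 + dYp e p * n2) pm pp * jump (evp chi) pm pp)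
  + sigt P / hd D * facesGL (fun _ _ pm pp => jump (evp e) pm pp * jump (evp chi) pm pp).

Definition b_eps (u : VF) (chi : SF) : R :=
  2 * volGL (fun p => epsdot u u p * evp chi p)
  + sig P / hd D * facesGL (fun _ _ pm pp =>
       dot2 (vjump u pm pp) (vjump u pm pp) * avgf (evp chi) pm pp).

Definition b_lam (u : VF) (chi : SF) : R :=
  - volGL (fun p => divu u p ^+ 2 * evp chi p).

Definition pres (w : 'I_4 -> R) : R :=
  (gam P - 1) * (w c3 - (w c1 ^+ 2 + w c2 ^+ 2) / (2 * w c0)).
Definition fluxn (n1 n2 : R) (w : 'I_4 -> R) : 'I_4 -> R :=
  let mn := w c1 * n1 + w c2 * n2 in
  let un := mn / w c0 in
  fun c => match nat_of_ord c with
           | 0 => mn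
           | 1 => w c1 * un + pres w * n1
           | 2 => w c2 * un + pres w * n2
           | _ => (w c3 + pres w) * un
           end.
(* wave speed |u.n| + c in direction n (|n| = 1) *)
Definition speed (n1 n2 : R) (w : 'I_4 -> R) : R :=
  `|(w c1 * n1 + w c2 * n2) / w c0| + Num.sqrt (gam P * pres w / w c0).
Definition alphaV (U : State) (i : 'I_(Nx D)) (j : 'I_(Ny D)) : R :=
  \big[Num.max/0]_(b < k.+1)
     Num.max (speed 1 0 (Uval U (Pt i j 1 (gx D b))))
             (speed 1 0 (Uval U (Pt (ordS i) j (-1) (gx D b)))).
Definition alphaH (U : State) (i : 'I_(Nx D)) (j : 'I_(Ny D)) : R :=
  \big[Num.max/0]_(b < k.+1)
     Num.max (speed 0 1 (Uval U (Pt i j (gx D b) 1)))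
             (speed 0 1 (Uval U (Pt i (ordS j) (gx D b) (-1)))).
(* local Lax-Friedrichs flux: n = n_K, win = U^- (interior), wout = U^+ *)
Definition llf (n1 n2 al : R) (win wout : 'I_4 -> R) : 'I_4 -> R :=
  fun c => (fluxn n1 n2 win c + fluxn n1 n2 wout c) / 2 - al / 2 * (wout c - win c).

Definition ipK (q psi : Qk) : R :=
  \sum_(a < k.+1) \sum_(b < k.+1) gw D a * gw D b * (dx D / 2) ^+ 2 *
     (evalQ q (gx D a) (gx D b) * evalQ psi (gx D a) (gx D b)).

(* right-hand side of the semi-discrete DG method, component c, cell (i,j),
   test function psi in Q^k(K):
   (F^a(U), grad psi)_K - int_{dK} (F^a.n_K)^ psi  (Gauss quadrature) *)
Definition rhsH (U : State) (c : 'I_4) (i : 'I_(Nx D)) (j : 'I_(Ny D)) (psi : Qk) : R :=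
  \sum_(a < k.+1) \sum_(b < k.+1) gw D a * gw D b * (dx D / 2) ^+ 2 *
     (fluxn 1 0 (Uval U (Pt i j (gx D a) (gx D b))) c
        * (2 / dx D * dxiQ psi (gx D a) (gx D b))
    + fluxn 0 1 (Uval U (Pt i j (gx D a) (gx D b))) c
        * (2 / dx D * detaQ psi (gx D a) (gx D b)))
  - \sum_(b < k.+1) gw D b * (dx D / 2) *
     (llf 1 0 (alphaV U i j) (Uval U (Pt i j 1 (gx D b)))
            (Uval U (Pt (ordS i) j (-1) (gx D b))) c * evalQ psi 1 (gx D b)
    + llf (-1) 0 (alphaV U (ord_pred i) j) (Uval U (Pt i j (-1) (gx D b)))
            (Uval U (Pt (ord_pred i) j 1 (gx D b))) c * evalQ psi (-1) (gx D b)
    + llf 0 1 (alphaH U i j) (Uval U (Pt i j (gx D b) 1))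
            (Uval U (Pt i (ordS j) (gx D b) (-1))) c * evalQ psi (gx D b) 1
    + llf 0 (-1) (alphaH U i (ord_pred j)) (Uval U (Pt i j (gx D b) (-1)))
            (Uval U (Pt i (ord_pred j) (gx D b) 1)) c * evalQ psi (gx D b) (-1)).

(* V = L(U): (V, psi)_K = rhsH U psi for all cells and all psi in Q^k(K) *)
Definition isL (U V : State) : Prop :=
  forall c i j (psi : Qk), ipK (V c i j) psi = rhsH U c i j psi.

Definition inG (w : 'I_4 -> R) : Prop :=
  0 < w c0 /\ 0 < w c3 - (w c1 ^+ 2 + w c2 ^+ 2) / (2 * w c0).
Definition inGeps (w : 'I_4 -> R) : bool :=
  (epsl P <= w c0) && (epsl P <= w c3 - (w c1 ^+ 2 + w c2 ^+ 2) / (2 * w c0)).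

(* cell average (computed exactly, by Gauss quadrature) *)
Definition cavg (q : Qk) : R :=
  (\sum_(a < k.+1) \sum_(b < k.+1) gw D a * gw D b * evalQ q (gx D a) (gx D b)) / 4.
Definition minS (S : seq (R * R)) (f : R -> R -> R) : R :=
  match S with
  | [::] => 0
  | p :: S' => foldr (fun q acc => Num.min (f q.1 q.2) acc) (f p.1 p.2) S'
  end.
(* the limiter on one cell with point set S_K; w = (rho_K, m_K, E_K).
   min{1, (a - eps)/(a - mn)} is read as 1 when the denominator vanishes. *)
Definition zs_cell (S : seq (R * R)) (w : 'I_4 -> Qk) : 'I_4 -> Qk :=
  let wbar := fun c => cavg (w c) in
  if inGeps wbar then
    let rb := wbar c0 in
    let mnr := minS S (evalQ (w c0)) in
    let thr := if mnr < rb then Num.min 1 ((rb - epsl P) / (rb - mnr)) else 1 in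
    let rhat := shiftQ thr (w c0) rb in
    let reb := wbar c3 - (wbar c1 ^+ 2 + wbar c2 ^+ 2) / (2 * rb) in
    let mne := minS S (fun x y => evalQ (w c3) x y
                 - (evalQ (w c1) x y ^+ 2 + evalQ (w c2) x y ^+ 2) / (2 * evalQ rhat x y)) in
    let the := if mne < reb then Num.min 1 ((reb - epsl P) / (reb - mne)) else 1 in
    fun c => shiftQ the (if c == c0 then rhat else w c) (wbar c)
  else w.
Definition limit (S : seq (R * R)) (U : State) : State :=
  fun c i j => zs_cell S (fun c' => U c' i j) c.

Definition ordsK := enum 'I_k.+1.
(* S_K of the hyperbolic step: Gauss volume points, Gauss points on the four
   faces, and the auxiliary Gauss x L-point Gauss-Lobatto tensor points *)
Definition S_H : seq (R * R) :=
  [seq (gx D a, gx D b) | a <- ordsK, b <- ordsK]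
  ++ [seq (1, gx D b) | b <- ordsK] ++ [seq (-1, gx D b) | b <- ordsK]
  ++ [seq (gx D a, 1) | a <- ordsK] ++ [seq (gx D a, -1) | a <- ordsK]
  ++ [seq (gx D a, ax D l) | a <- ordsK, l <- enum 'I_(La D)]
  ++ [seq (ax D l, gx D a) | a <- ordsK, l <- enum 'I_(La D)].
Definition S_GL : seq (R * R) := [seq (lx D a, lx D b) | a <- ordsK, b <- ordsK].

(* one SSP-RK3 step of size tau, limiter on S_h after each stage *)
Definition ssprk (tau : R) (U Unew : State) : Prop :=
  exists L0 L1 L2 U1 U2 : State,
    isL U L0 /\ U1 = limit S_H (combS 1 U tau L0) /\
    isL U1 L1 /\ U2 = limit S_H (combS (3/4) U (1/4) (combS 1 U1 tau L1)) /\
    isL U2 L2 /\ Unew = limit S_H (combS (1/3) U (2/3) (combS 1 U2 tau L2)).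
(* step (H) over time dt/2, in N >= 1 substeps of positive sizes summing to dt/2 *)
Definition Hstep (dt : R) (Uin Uout : State) : Prop :=
  exists (N : nat) (taus : nat -> R) (Us : nat -> State),
    Us 0%N = Uin /\ Us N = Uout /\ (forall s, (s < N)%N -> 0 < taus s) /\
    \sum_(s < N) taus s = dt / 2 /\
    (forall s, (s < N)%N -> ssprk (taus s) (Us s) (Us s.+1)).

Definition shiftE (E : SF) (T : {set cell}) (Es : cell -> R) : SF :=
  fun i j => if (i, j) \in T
             then (fun a b => E i j a b + cstQ (Es (i, j) - cavg (E i j)) a b)
             else E i j.
Definition avgw (r m1 m2 E : SF) (p : cell) : 'I_4 -> R :=
  fun c => match nat_of_ord c with
           | 0 => cavg (r p.1 p.2) | 1 => cavg (m1 p.1 p.2)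
           | 2 => cavg (m2 p.1 p.2) | _ => cavg (E p.1 p.2) end.
Definition avgwE (r m1 m2 : SF) (Eb : R) (p : cell) : 'I_4 -> R :=
  fun c => match nat_of_ord c with
           | 0 => cavg (r p.1 p.2) | 1 => cavg (m1 p.1 p.2)
           | 2 => cavg (m2 p.1 p.2) | _ => Eb end.
Definition efeasible (r m1 m2 E : SF) (T : {set cell}) (Es : cell -> R) : Prop :=
  \sum_(p in T) Es p * dx D ^+ 2 = \sum_(p in T) cavg (E p.1 p.2) * dx D ^+ 2 /\
  (forall p, p \in T -> inGeps (avgwE r m1 m2 (Es p) p)).
Definition efix (r m1 m2 E E' : SF) : Prop :=
  ((forall p : cell, inGeps (avgw r m1 m2 E p)) -> E' = E) /\
  (~ (forall p : cell, inGeps (avgw r m1 m2 E p)) ->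
    exists (T : {set cell}) (Es : cell -> R),
      efeasible r m1 m2 E T Es /\
      (forall Es', efeasible r m1 m2 E T Es' ->
         \sum_(p in T) (Es p - cavg (E p.1 p.2)) ^+ 2
           <= \sum_(p in T) (Es' p - cavg (E p.1 p.2)) ^+ 2) /\
      E' = shiftE E T Es).

Definition mkState (r m1 m2 E : SF) : State :=
  fun c => match nat_of_ord c with 0 => r | 1 => m1 | 2 => m2 | _ => E end.

(* ---- steps (2)-(4): from U^H (output of the first step (H)) to U^P ---- *)
Definition Pstep (dt : R) (UH UP : State) : Prop :=
  exists (UHl : State) (uH ust uP mP : VF) (eH est eP EP0 EP1 : SF),
    (* (2) limiter at the Gauss-Lobatto points, then velocity / internal energy *)
    UHl = limit S_GL UH /\
    (forall th : VF, vipGL (UHl c1, UHl c2) th = vipGL3 (UHl c0) uH th) /\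
    (forall chi : SF, ipGL (UHl c3) chi
        = ipGL3 (UHl c0) eH chi + kinGL (UHl c0) (UHl c1, UHl c2) chi) /\
    (* (3) rho^P = rho^H; implicit velocity and internal energy updates *)
    (forall th : VF, vipGL3 (UHl c0) ust th
        + dt / (2 * reyn P) * a_eps ust th + dt / (3 * reyn P) * a_lam ust th
        = vipGL3 (UHl c0) uH th) /\
    uP = (combF 2 ust.1 (-1) uH.1, combF 2 ust.2 (-1) uH.2) /\
    (forall chi : SF, ipGL3 (UHl c0) est chi
        + vth P * dt * lamh P / reyn P * a_D est chi
        = ipGL3 (UHl c0) eH chi + vth P * dt / reyn P * b_eps ust chi
          + 2 * vth P * dt / (3 * reyn P) * b_lam ust chi) /\
    eP = combF (1 / vth P) est (1 - 1 / vth P) eH /\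
    (* (4) back to conserved variables, energy redistribution, limiter on S_h *)
    (forall th : VF, vipGL mP th = vipGL3 (UHl c0) uP th) /\
    (forall chi : SF, ipGL EP0 chi = ipGL3 (UHl c0) eP chi + kinGL (UHl c0) mP chi) /\
    efix (UHl c0) mP.1 mP.2 EP0 EP1 /\
    UP = limit S_H (mkState (UHl c0) mP.1 mP.2 EP1).

End Scheme.
Arguments oneF {R D}.

(* Main.v *)
Require Import Defs.
From mathcomp Require Import all_boot all_order all_algebra ring lra zify.
From Stdlib Require Import Classical_Prop.
Import Order.TTheory GRing.Theory Num.Theory.
Local Open Scope ring_scope.
Set Implicit Arguments. Unset Strict Implicit.

Section Aux.
Variables (R : rcfType) (D : disc R) (P : phys R).
Local Notation k := (kd D).

Lemma sum_delta n (F : 'I_n -> R) i0 : (forall i, i != i0 -> F i = 0) ->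
  \sum_(i < n) F i = F i0.
Proof. by move=> H; rewrite (bigD1 i0) //= big1 ?addr0 // => i /H. Qed.

Lemma sum00 (G : 'I_k.+1 -> 'I_k.+1 -> R) :
  (forall a b, ~~ ((a == ord0) && (b == ord0)) -> G a b = 0) ->
  \sum_(a < k.+1) \sum_(b < k.+1) G a b = G ord0 ord0.
Proof.
move=> H; rewrite (sum_delta _ (i0 := ord0)) ?(sum_delta _ (i0 := ord0)) //.
  by move=> b hb; apply: H; rewrite eqxx /= hb.
move=> a ha; apply: big1 => b _; apply: H; by rewrite (negbTE ha).
Qed.

Lemma evalQ_cst v x y : evalQ (cstQ (D:=D) v) x y = v.
Proof.
rewrite /evalQ (@sum00 (fun a b => cstQ v a b * x ^+ a * y ^+ b)).
  by rewrite /cstQ !eqxx /= !expr0 !mulr1.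
by move=> a b /negbTE h; rewrite /cstQ h !mul0r.
Qed.

Lemma dxiQ_cst v x y : dxiQ (cstQ (D:=D) v) x y = 0.
Proof.
rewrite /dxiQ (@sum00 (fun a b => cstQ v a b * (a : nat)%:R * x ^+ a.-1 * y ^+ b)).
  by rewrite /= mulr0 !mul0r.
by move=> a b /negbTE h; rewrite /cstQ h !mul0r.
Qed.

Lemma detaQ_cst v x y : detaQ (cstQ (D:=D) v) x y = 0.
Proof.
rewrite /detaQ (@sum00 (fun a b => cstQ v a b * (b : nat)%:R * x ^+ a * y ^+ b.-1)).
  by rewrite /= mulr0 !mul0r.
by move=> a b /negbTE h; rewrite /cstQ h !mul0r.
Qed.

Lemma evalQ_lin al be (q r : Qk D) x y :
  evalQ (fun a b => al * q a b + be * r a b) x y = al * evalQ q x y + be * evalQ r x y.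
Proof.
rewrite /evalQ !mulr_sumr -big_split /=; apply: eq_bigr => a _.
rewrite !mulr_sumr -big_split /=; apply: eq_bigr => b _; ring.
Qed.


Lemma evalQ_ext (q r : Qk D) x y : (forall a b, q a b = r a b) -> evalQ q x y = evalQ r x y.
Proof. by move=> h; apply: eq_bigr => a _; apply: eq_bigr => b _; rewrite h. Qed.

Lemma cavg_ext (q r : Qk D) : (forall a b, q a b = r a b) -> cavg q = cavg r.
Proof.
by move=> h; rewrite /cavg; congr (_ / _); apply: eq_bigr => a _; apply: eq_bigr => b _;
  rewrite (evalQ_ext _ _ h).
Qed.

Lemma cavg_lin al be (q r : Qk D) :
  cavg (fun a b => al * q a b + be * r a b) = al * cavg q + be * cavg r.
Proof.
rewrite /cavg !mulrA -mulrDl; congr (_ / _).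
rewrite !mulr_sumr -big_split /=; apply: eq_bigr => a _.
rewrite !mulr_sumr -big_split /=; apply: eq_bigr => b _; rewrite evalQ_lin; ring.
Qed.

Lemma quad_exact (x w : 'I_k.+1 -> R) :
  (forall m, (m <= k)%N -> \sum_(i < k.+1) w i * x i ^+ m = mono_int R m) ->
  forall q : Qk D, \sum_(a < k.+1) \sum_(b < k.+1) w a * w b * evalQ q (x a) (x b)
    = \sum_(a < k.+1) \sum_(b < k.+1) q a b * mono_int R a * mono_int R b.
Proof.
move=> hex q.
have e1 : forall a b, w a * w b * evalQ q (x a) (x b) =
   \sum_(a' < k.+1) \sum_(b' < k.+1) q a' b' * (w a * x a ^+ a') * (w b * x b ^+ b').
  move=> a b; rewrite /evalQ mulr_sumr; apply: eq_bigr => a' _.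
  rewrite mulr_sumr; apply: eq_bigr => b' _; ring.
under eq_bigr => a _ do under eq_bigr => b _ do rewrite e1.
under eq_bigr => a _ do rewrite exchange_big /=.
rewrite exchange_big /=; apply: eq_bigr => a' _.
under eq_bigr => a _ do rewrite exchange_big /=.
rewrite exchange_big /=; apply: eq_bigr => b' _.
have ha : (a' <= k)%N by rewrite -ltnS ltn_ord.
have hb : (b' <= k)%N by rewrite -ltnS ltn_ord.
rewrite -(hex _ ha) -(hex _ hb) -mulrA mulr_suml mulr_sumr; apply: eq_bigr => a _.
rewrite !mulr_sumr; apply: eq_bigr => b _; ring.
Qed.


Lemma gauss_ex : gauss_rule (gx D) (gw D) ->
  forall m, (m <= k)%N -> \sum_(i < k.+1) gw D i * gx D i ^+ m = mono_int R m.
Proof. by case=> _ [_ h] m hm; apply: h; lia. Qed.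

Lemma gl_ex : (1 <= k)%N -> gl_rule (lx D) (lw D) ->
  forall m, (m <= k)%N -> \sum_(i < k.+1) lw D i * lx D i ^+ m = mono_int R m.
Proof.
move=> hk [_ [_ [_ [_ h]]]] m hm; apply: h.
lia.
Qed.

Definition Gsum (q : Qk D) :=
  \sum_(a < k.+1) \sum_(b < k.+1) gw D a * gw D b * evalQ q (gx D a) (gx D b).
Definition GLsum (q : Qk D) :=
  \sum_(a < k.+1) \sum_(b < k.+1) lw D a * lw D b * evalQ q (lx D a) (lx D b).

Lemma cavgE q : cavg q = Gsum q / 4.
Proof. by []. Qed.

Lemma GLsumE : (1 <= k)%N -> gl_rule (lx D) (lw D) -> gauss_rule (gx D) (gw D) ->
  forall q, GLsum q = Gsum q.
Proof.
move=> hk hl hg q; rewrite /GLsum /Gsum (quad_exact (gl_ex hk hl)).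
by rewrite (quad_exact (gauss_ex hg)).
Qed.

Lemma Gsum_cst : gauss_rule (gx D) (gw D) -> forall v, Gsum (cstQ v) = 4 * v.
Proof.
move=> hg v; rewrite /Gsum (quad_exact (gauss_ex hg)).
rewrite (@sum00 (fun a b => cstQ (D:=D) v a b * mono_int R a * mono_int R b)).
  by rewrite /cstQ !eqxx /mono_int /= divr1; ring.
by move=> a b /negbTE h; rewrite /cstQ h !mul0r.
Qed.

Lemma cavg_cst : gauss_rule (gx D) (gw D) -> forall v, cavg (cstQ (D:=D) v) = v.
Proof. by move=> hg v; rewrite cavgE Gsum_cst //; field. Qed.

Lemma cavg_shift : gauss_rule (gx D) (gw D) -> forall th (q : Qk D) v,
  cavg (shiftQ th q v) = th * cavg q + (1 - th) * v.
Proof.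
move=> hg th q v.
rewrite (@cavg_ext _ (fun a b => th * q a b + 1 * cstQ ((1 - th) * v) a b)).
  by rewrite cavg_lin cavg_cst // mul1r.
by move=> a b; rewrite /shiftQ mul1r.
Qed.

Lemma cavg_limit : gauss_rule (gx D) (gw D) -> forall S (U : State D) c i j,
  cavg (limit P S U c i j) = cavg (U c i j).
Proof.
move=> hg S U c i j; rewrite /limit /zs_cell; case: ifP => // _.
rewrite cavg_shift //; case: eqP => [->|_]; last by ring.
rewrite cavg_shift //; ring.
Qed.


Lemma llfV al (win wout : 'I_4 -> R) c :
  llf P (-1) 0 al win wout c = - llf P 1 0 al wout win c.
Proof. by rewrite /llf /fluxn; case: (nat_of_ord c) => [|[|[|n]]] /=; ring. Qed.

Lemma llfH al (win wout : 'I_4 -> R) c :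
  llf P 0 (-1) al win wout c = - llf P 0 1 al wout win c.
Proof. by rewrite /llf /fluxn; case: (nat_of_ord c) => [|[|[|n]]] /=; ring. Qed.

Lemma tele (A B C Dd : 'I_(Nx D) -> 'I_(Ny D) -> 'I_k.+1 -> R) (g : 'I_k.+1 -> R) :
  (forall i j b, B (ordS i) j b = - A i j b) ->
  (forall i j b, Dd i (ordS j) b = - C i j b) ->
  \sum_(i < Nx D) \sum_(j < Ny D) \sum_(b < k.+1) g b * (A i j b + B i j b + C i j b + Dd i j b) = 0.
Proof.
move=> hB hD.
transitivity ((\sum_(i < Nx D) \sum_(j < Ny D) \sum_(b < k.+1) g b * A i j b)
  + (\sum_(i < Nx D) \sum_(j < Ny D) \sum_(b < k.+1) g b * B i j b)
  + ((\sum_(i < Nx D) \sum_(j < Ny D) \sum_(b < k.+1) g b * C i j b)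
  + (\sum_(i < Nx D) \sum_(j < Ny D) \sum_(b < k.+1) g b * Dd i j b))).
  rewrite -!big_split /=; apply: eq_bigr => i _; rewrite -!big_split /=.
  apply: eq_bigr => j _; rewrite -!big_split /=; apply: eq_bigr => b _; ring.
rewrite [X in _ + X + _](reindex_inj (@ordS_inj _)) /=.
rewrite -big_split big1 ?add0r /=; last first.
  move=> i _; rewrite -big_split big1 //= => j _; rewrite -big_split big1 //= => b _.
  by rewrite hB; ring.
rewrite -big_split big1 //= => i _.
rewrite [X in _ + X](reindex_inj (@ordS_inj _)) /=.
rewrite -big_split big1 //= => j _; rewrite -big_split big1 //= => b _.
by rewrite hD; ring.
Qed.


Definition tot (f : SF D) := \sum_(i < Nx D) \sum_(j < Ny D) cavg (f i j).

Lemma tot_limit : gauss_rule (gx D) (gw D) -> forall S (U : State D) c,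
  tot (limit P S U c) = tot (U c).
Proof.
by move=> hg S U c; apply: eq_bigr => i _; apply: eq_bigr => j _; rewrite cavg_limit.
Qed.

Lemma tot_comb al be (U V : State D) c :
  tot (combS al U be V c) = al * tot (U c) + be * tot (V c).
Proof.
rewrite /tot mulr_sumr [be * _]mulr_sumr -big_split; apply: eq_bigr => i _.
rewrite mulr_sumr [be * _]mulr_sumr -big_split; apply: eq_bigr => j _.
by rewrite (@cavg_ext _ (fun a b => al * U c i j a b + be * V c i j a b)) // cavg_lin.
Qed.

Lemma ipK_one (q : Qk D) : ipK q (cstQ 1) = (dx D / 2) ^+ 2 * Gsum q.
Proof.
rewrite /ipK /Gsum mulr_sumr; apply: eq_bigr => a _.
rewrite mulr_sumr; apply: eq_bigr => b _; rewrite evalQ_cst; ring.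
Qed.

Lemma rhsH_one (U : State D) c i j : rhsH P U c i j (cstQ 1) =
  - \sum_(b < k.+1) (gw D b * (dx D / 2)) *
    (llf P 1 0 (alphaV P U i j) (Uval U (Pt i j 1 (gx D b)))
            (Uval U (Pt (ordS i) j (-1) (gx D b))) c
    + llf P (-1) 0 (alphaV P U (ord_pred i) j) (Uval U (Pt i j (-1) (gx D b)))
            (Uval U (Pt (ord_pred i) j 1 (gx D b))) c
    + llf P 0 1 (alphaH P U i j) (Uval U (Pt i j (gx D b) 1))
            (Uval U (Pt i (ordS j) (gx D b) (-1))) c
    + llf P 0 (-1) (alphaH P U i (ord_pred j)) (Uval U (Pt i j (gx D b) (-1)))
            (Uval U (Pt i (ord_pred j) (gx D b) 1)) c).
Proof.
rewrite /rhsH big1 ?sub0r; last first.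
  move=> a _; apply: big1 => b _; rewrite dxiQ_cst detaQ_cst; ring.
by congr (- _); apply: eq_bigr => b _; rewrite !evalQ_cst !mulr1.
Qed.

Lemma tot_L : 0 < dx D -> forall U L : State D, isL P U L -> forall c, tot (L c) = 0.
Proof.
move=> hdx U L hL c.
have hne : (dx D / 2) ^+ 2 * 4 != 0.
  by rewrite mulf_neq0 // ?expf_neq0 // ?mulf_neq0 ?invr_eq0 ?gt_eqF ?pnatr_eq0.
have h : forall i j, cavg (L c i j) = rhsH P U c i j (cstQ 1) / ((dx D / 2) ^+ 2 * 4).
  move=> i j; rewrite -hL ipK_one cavgE; field.
  by rewrite gt_eqF.
have hs : \sum_(i < Nx D) \sum_(j < Ny D) rhsH P U c i j (cstQ 1) = 0.
  under eq_bigr => i _ do under eq_bigr => j _ do rewrite rhsH_one.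
  under eq_bigr => i _ do rewrite sumrN.
  rewrite sumrN; apply/eqP; rewrite oppr_eq0; apply/eqP.
  apply: (@tele
    (fun i j b => llf P 1 0 (alphaV P U i j) (Uval U (Pt i j 1 (gx D b)))
            (Uval U (Pt (ordS i) j (-1) (gx D b))) c)
    (fun i j b => llf P (-1) 0 (alphaV P U (ord_pred i) j) (Uval U (Pt i j (-1) (gx D b)))
            (Uval U (Pt (ord_pred i) j 1 (gx D b))) c)
    (fun i j b => llf P 0 1 (alphaH P U i j) (Uval U (Pt i j (gx D b) 1))
            (Uval U (Pt i (ordS j) (gx D b) (-1))) c)
    (fun i j b => llf P 0 (-1) (alphaH P U i (ord_pred j)) (Uval U (Pt i j (gx D b) (-1)))
            (Uval U (Pt i (ord_pred j) (gx D b) 1)) c)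
    (fun b => gw D b * (dx D / 2))).
    by move=> i j b /=; rewrite ordSK llfV.
  by move=> i j b /=; rewrite ordSK llfH.
rewrite /tot (eq_bigr (fun i => (\sum_(j < Ny D) rhsH P U c i j (cstQ 1)) / ((dx D / 2) ^+ 2 * 4))); last first.
  by move=> i _; rewrite big_distrl /=; apply: eq_bigr => j _; rewrite h.
by rewrite -big_distrl /= hs mul0r.
Qed.


Lemma ssprk_tot : gauss_rule (gx D) (gw D) -> 0 < dx D ->
  forall tau (U V : State D), ssprk P tau U V -> forall c, tot (V c) = tot (U c).
Proof.
move=> hg hdx tau U V [L0 [L1 [L2 [U1 [U2 [h0 [e1 [h1 [e2 [h2 e3]]]]]]]]]] c.
have t1 : tot (U1 c) = tot (U c).
  by rewrite e1 tot_limit // tot_comb (tot_L hdx h0); ring.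
have t2 : tot (U2 c) = tot (U c).
  rewrite e2 tot_limit // tot_comb tot_comb (tot_L hdx h1) t1.
  by rewrite mulr0 addr0; field.
rewrite e3 tot_limit // tot_comb tot_comb (tot_L hdx h2) t2.
by rewrite mulr0 addr0; field.
Qed.

Lemma Hstep_tot : gauss_rule (gx D) (gw D) -> 0 < dx D ->
  forall dt (U V : State D), Hstep P dt U V -> forall c, tot (V c) = tot (U c).
Proof.
move=> hg hdx dt U V [N [taus [Us [h0 [hN [_ [_ hs]]]]]]] c.
suff : forall s, (s <= N)%N -> tot (Us s c) = tot (U c) by move/(_ N (leqnn N)); rewrite hN.
elim=> [|s IH] hsN; first by rewrite h0.
by rewrite (ssprk_tot hg hdx (hs s hsN)) IH // ltnW.
Qed.


Definition lsq (a : 'I_k.+1) := filter (fun c => c != a) (enum 'I_k.+1).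
Definition lpr (a : 'I_k.+1) : {poly R} := \prod_(c <- lsq a) ('X - (lx D c)%:P).
Definition lagr (a : 'I_k.+1) : {poly R} := ((lpr a).[lx D a])^-1 *: lpr a.

Lemma lagr_size a : (size (lagr a) <= k.+1)%N.
Proof.
apply: (leq_trans (size_scale_leq _ _)); rewrite /lpr size_prod_XsubC ltnS /lsq size_filter.
have h1 := count_predC (fun c : 'I_k.+1 => c != a) (enum 'I_k.+1).
have h2 : (0 < count (predC (fun c : 'I_k.+1 => c != a)) (enum 'I_k.+1))%N.
  by rewrite -has_count; apply/hasP; exists a; rewrite ?mem_enum //= eqxx.
move: h1 h2; rewrite size_enum_ord; set u := count (fun c : 'I_k.+1 => c != a) _; set v := count _ _; lia.
Qed.

Lemma lagr_eval : injective (lx D) -> forall a a', (lagr a).[lx D a'] = (a' == a)%:R.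
Proof.
move=> hinj a a'; rewrite /lagr hornerZ.
case: eqP => [->|ne].
  rewrite mulVf //= /lpr horner_prod prodf_seq_neq0; apply/allP => c.
  rewrite /lsq mem_filter => /andP[ca _] /=; rewrite hornerXsubC subr_eq0.
  by apply/eqP => /hinj e; move: ca; rewrite e eqxx.
have -> : (lpr a).[lx D a'] = 0.
  apply/eqP; rewrite /lpr horner_prod prodf_seq_eq0; apply/hasP; exists a'.
    by rewrite /lsq mem_filter mem_enum andbT; apply/eqP.
  by rewrite /= hornerXsubC subrr.
by rewrite mulr0.
Qed.

Definition LQ (a b : 'I_k.+1) : Qk D := fun a' b' => (lagr a)`_a' * (lagr b)`_b'.

Lemma evalQ_LQ a b x y : evalQ (LQ a b) x y = (lagr a).[x] * (lagr b).[y].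
Proof.
rewrite (horner_coef_wide _ (lagr_size a)) (horner_coef_wide _ (lagr_size b)).
rewrite /evalQ mulr_suml; apply: eq_bigr => a' _; rewrite mulr_sumr.
by apply: eq_bigr => b' _; rewrite /LQ; ring.
Qed.


Definition Wgl (a b : 'I_k.+1) := lw D a * lw D b * (dx D / 2) ^+ 2.
Definition nd i j a b : pt D := Pt i j (lx D a) (lx D b).
Definition zF : SF D := fun _ _ => cstQ 0.

Lemma evp_nd (f : SF D) i j a b : evp f (nd i j a b) = evalQ (f i j) (lx D a) (lx D b).
Proof. by []. Qed.

Lemma evp_one (p : pt D) : evp oneF p = 1.
Proof. exact: evalQ_cst. Qed.
Lemma evp_z (p : pt D) : evp zF p = 0.
Proof. exact: evalQ_cst. Qed.
Lemma dXp_one (p : pt D) : dXp oneF p = 0.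
Proof. by rewrite /dXp dxiQ_cst mulr0. Qed.
Lemma dYp_one (p : pt D) : dYp oneF p = 0.
Proof. by rewrite /dYp detaQ_cst mulr0. Qed.
Lemma dXp_z (p : pt D) : dXp zF p = 0.
Proof. by rewrite /dXp dxiQ_cst mulr0. Qed.
Lemma dYp_z (p : pt D) : dYp zF p = 0.
Proof. by rewrite /dYp detaQ_cst mulr0. Qed.

Lemma evp_comb al be (f g : SF D) p :
  evp (combF al f be g) p = al * evp f p + be * evp g p.
Proof. exact: evalQ_lin. Qed.

Lemma volGL_ext (F G : pt D -> R) : (forall p, F p = G p) -> volGL F = volGL G.
Proof.
move=> h; apply: eq_bigr => i _; apply: eq_bigr => j _; apply: eq_bigr => a _.
by apply: eq_bigr => b _; rewrite h.
Qed.

Lemma volGL_w (F G : pt D -> R) :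
  (forall i j a b, Wgl a b * F (nd i j a b) = Wgl a b * G (nd i j a b)) -> volGL F = volGL G.
Proof.
move=> h; apply: eq_bigr => i _; apply: eq_bigr => j _; apply: eq_bigr => a _.
by apply: eq_bigr => b _; apply: h.
Qed.

Lemma volGL0 (F : pt D -> R) : (forall p, F p = 0) -> volGL F = 0.
Proof.
move=> h; apply: big1 => i _; apply: big1 => j _; apply: big1 => a _.
by apply: big1 => b _; rewrite h mulr0.
Qed.

Lemma facesGL0 (F : R -> R -> pt D -> pt D -> R) :
  (forall n1 n2 pm pp, F n1 n2 pm pp = 0) -> facesGL F = 0.
Proof.
move=> h; apply: big1 => i _; apply: big1 => j _; apply: big1 => b _.
by rewrite !h addr0 mulr0.
Qed.

Lemma facesGL_ext (F G : R -> R -> pt D -> pt D -> R) :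
  (forall n1 n2 pm pp, F n1 n2 pm pp = G n1 n2 pm pp) -> facesGL F = facesGL G.
Proof.
move=> h; apply: eq_bigr => i _; apply: eq_bigr => j _; apply: eq_bigr => b _.
by rewrite !h.
Qed.

Lemma volGL_lin al be (F G : pt D -> R) :
  volGL (fun p => al * F p + be * G p) = al * volGL F + be * volGL G.
Proof.
rewrite /volGL mulr_sumr [be * _]mulr_sumr -big_split; apply: eq_bigr => i _.
rewrite mulr_sumr [be * _]mulr_sumr -big_split; apply: eq_bigr => j _.
rewrite mulr_sumr [be * _]mulr_sumr -big_split; apply: eq_bigr => a _.
rewrite mulr_sumr [be * _]mulr_sumr -big_split; apply: eq_bigr => b _.
rewrite /=; ring.
Qed.

Definition dlt i0 j0 a0 b0 : SF D :=
  fun i j => if (i == i0) && (j == j0) then LQ a0 b0 else cstQ 0.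

Lemma volGL_dlt : injective (lx D) -> forall (F : pt D -> R) i0 j0 a0 b0,
  volGL (fun p => F p * evp (dlt i0 j0 a0 b0) p) = Wgl a0 b0 * F (nd i0 j0 a0 b0).
Proof.
move=> hinj F i0 j0 a0 b0; rewrite /volGL (sum_delta _ (i0 := i0)); last first.
  move=> i /negbTE hi; apply: big1 => j _; apply: big1 => a _; apply: big1 => b _.
  by rewrite /evp /dlt /= hi evalQ_cst !mulr0.
rewrite (sum_delta _ (i0 := j0)); last first.
  move=> j /negbTE hj; apply: big1 => a _; apply: big1 => b _.
  by rewrite /evp /dlt /= hj andbF evalQ_cst !mulr0.
rewrite (sum_delta _ (i0 := a0)); last first.
  move=> a /negbTE ha; apply: big1 => b _.
  by rewrite /evp /dlt /= !eqxx evalQ_LQ lagr_eval // ha !(mulr0, mul0r).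
rewrite (sum_delta _ (i0 := b0)); last first.
  move=> b /negbTE hb.
  by rewrite /evp /dlt /= !eqxx evalQ_LQ !lagr_eval // eqxx hb !(mulr0, mul0r).
by rewrite /evp /dlt /= !eqxx evalQ_LQ !lagr_eval // !eqxx /= mulr1 mulr1.
Qed.

Lemma nodal : injective (lx D) -> forall f r g : SF D,
  (forall chi, ipGL f chi = ipGL3 r g chi) ->
  forall i j a b, Wgl a b * evp f (nd i j a b) = Wgl a b * (evp r (nd i j a b) * evp g (nd i j a b)).
Proof.
move=> hinj f r g h i j a b; have := h (dlt i j a b).
by rewrite /ipGL /ipGL3 !volGL_dlt.
Qed.

Lemma kin_pt (W m r u : R) : W * m = W * (r * u) -> W * (m / (2 * r) * m) = W * (r * u * u / 2).
Proof.
have [->|hW] := eqVneq W 0; first by rewrite !mul0r.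
move/(mulfI hW) => ->.
have [->|hr] := eqVneq r 0; first by rewrite !(mul0r, mulr0, invr0).
by congr (_ * _); field; rewrite hr.
Qed.


Ltac simp0 := rewrite /epsn /avgv /vjump /jump /dot2 /avgf /divu /dotn /epsdot /e11 /e22 /e12 /=
   ?dXp_one ?dYp_one ?dXp_z ?dYp_z ?evp_one ?evp_z.

Lemma a_eps_1 (u : VF D) : a_eps P u (oneF, zF) = 0.
Proof.
rewrite /a_eps volGL0 ?facesGL0; try (move=> *; simp0); ring.
Qed.
Lemma a_eps_2 (u : VF D) : a_eps P u (zF, oneF) = 0.
Proof.
rewrite /a_eps volGL0 ?facesGL0; try (move=> *; simp0); ring.
Qed.
Lemma a_lam_1 (u : VF D) : a_lam u (oneF, zF) = 0.
Proof.
rewrite /a_lam volGL0 ?facesGL0; try (move=> *; simp0); ring.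
Qed.
Lemma a_lam_2 (u : VF D) : a_lam u (zF, oneF) = 0.
Proof.
rewrite /a_lam volGL0 ?facesGL0; try (move=> *; simp0); ring.
Qed.
Lemma a_D_1 (e : SF D) : a_D P e oneF = 0.
Proof.
rewrite /a_D volGL0 ?facesGL0; try (move=> *; simp0); ring.
Qed.

Lemma a_eps_b (u : VF D) : a_eps P u u = b_eps P u oneF.
Proof.
rewrite /a_eps /b_eps (@volGL_ext (fun p => epsdot u u p * evp oneF p) (epsdot u u)); last first.
  by move=> p; rewrite evp_one mulr1.
rewrite (@facesGL_ext (fun _ _ pm pp => dot2 (vjump u pm pp) (vjump u pm pp) * avgf (evp oneF) pm pp)
   (fun _ _ pm pp => dot2 (vjump u pm pp) (vjump u pm pp))); last first.
  by move=> *; rewrite /avgf !evp_one; field.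
ring.
Qed.

Lemma a_lam_b (u : VF D) : a_lam u u = b_lam u oneF.
Proof.
rewrite /a_lam /b_lam (@volGL_ext (fun p => divu u p ^+ 2 * evp oneF p) (fun p => divu u p * divu u p)).
  ring.
by move=> p; rewrite evp_one mulr1 expr2.
Qed.


Lemma ipG_tot (f : SF D) : ipG f oneF = (dx D / 2) ^+ 2 * 4 * tot f.
Proof.
rewrite /ipG /volG /tot !mulr_sumr; apply: eq_bigr => i _; rewrite mulr_sumr.
apply: eq_bigr => j _; rewrite cavgE /Gsum.
transitivity ((dx D / 2) ^+ 2 * \sum_(a < k.+1) \sum_(b < k.+1) gw D a * gw D b * evalQ (f i j) (gx D a) (gx D b)).
  rewrite mulr_sumr; apply: eq_bigr => a _; rewrite mulr_sumr; apply: eq_bigr => b _.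
  by rewrite evp_one /evp /=; ring.
by field.
Qed.

Lemma ipGL_tot : (1 <= k)%N -> gl_rule (lx D) (lw D) -> gauss_rule (gx D) (gw D) ->
  forall f : SF D, ipGL f oneF = (dx D / 2) ^+ 2 * 4 * tot f.
Proof.
move=> hk hl hg f.
rewrite /ipGL /volGL /tot !mulr_sumr; apply: eq_bigr => i _; rewrite mulr_sumr.
apply: eq_bigr => j _; rewrite cavgE -(GLsumE hk hl hg) /GLsum.
transitivity ((dx D / 2) ^+ 2 * \sum_(a < k.+1) \sum_(b < k.+1) lw D a * lw D b * evalQ (f i j) (lx D a) (lx D b)).
  rewrite mulr_sumr; apply: eq_bigr => a _; rewrite mulr_sumr; apply: eq_bigr => b _.
  by rewrite evp_one /evp /=; ring.
by field.
Qed.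

Lemma ipGL_z (f : SF D) : ipGL f zF = 0.
Proof. by apply: volGL0 => p; rewrite evp_z mulr0. Qed.
Lemma ipGL3_z (r f : SF D) : ipGL3 r f zF = 0.
Proof. by apply: volGL0 => p; rewrite evp_z mulr0. Qed.

Lemma ipGL3_comb (r : SF D) al f be g chi :
  ipGL3 r (combF al f be g) chi = al * ipGL3 r f chi + be * ipGL3 r g chi.
Proof.
rewrite /ipGL3 -volGL_lin; apply: volGL_ext => p; rewrite evp_comb; ring.
Qed.

Lemma volGLD (F G : pt D -> R) : volGL (fun p => F p + G p) = volGL F + volGL G.
Proof. rewrite -[volGL F]mul1r -[volGL G]mul1r -volGL_lin; apply: volGL_ext => p; ring. Qed.
Lemma volGLZ c (F : pt D -> R) : c * volGL F = volGL (fun p => c * F p).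
Proof. rewrite -[_ * volGL F]addr0 -[X in _ + X](mul0r (volGL F)) -volGL_lin; apply: volGL_ext => p; ring. Qed.
Lemma volGLB (F G : pt D -> R) : volGL (fun p => F p - G p) = volGL F - volGL G.
Proof. rewrite -[volGL F]mul1r -mulN1r -volGL_lin; apply: volGL_ext => p; ring. Qed.

Lemma efix_tot : gauss_rule (gx D) (gw D) -> 0 < dx D ->
  forall r m1 m2 E E' : SF D, efix P r m1 m2 E E' -> tot E' = tot E.
Proof.
move=> hg hdx r m1 m2 E E' [hA hB].
case: (Classical_Prop.classic (forall p, inGeps P (avgw r m1 m2 E p))) => h.
  by rewrite (hA h).
have [T [Es [[hs _] [_ ->]]]] := hB h.
have e : forall i j, cavg (shiftE E T Es i j) =
   cavg (E i j) + (if (i, j) \in T then Es (i, j) - cavg (E i j) else 0).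
  move=> i j; rewrite /shiftE; case: ifP => _; last by rewrite addr0.
  rewrite (@cavg_ext _ (fun a b => 1 * E i j a b + 1 * cstQ (Es (i, j) - cavg (E i j)) a b)).
    by rewrite cavg_lin cavg_cst // !mul1r.
  by move=> a b; rewrite !mul1r.
rewrite /tot (eq_bigr (fun i => \sum_(j < Ny D) (cavg (E i j) +
   (if (i, j) \in T then Es (i, j) - cavg (E i j) else 0)))); last first.
  by move=> i _; apply: eq_bigr => j _; rewrite e.
under eq_bigr => i _ do rewrite big_split /=.
rewrite big_split /= [X in _ + X](_ : _ = 0) ?addr0 // pair_bigA /=.
under eq_bigr => p _ do rewrite -surjective_pairing.
rewrite -big_mkcond /= sumrB.
have hdx2 : dx D ^+ 2 != 0 by rewrite expf_neq0 // gt_eqF.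
move: hs; rewrite -!big_distrl /= => /(mulIf hdx2) ->.
by rewrite subrr.
Qed.


Lemma Pstep_tot : (1 <= k)%N -> gl_rule (lx D) (lw D) -> gauss_rule (gx D) (gw D) ->
  0 < dx D -> 0 < vth P -> 0 < reyn P ->
  forall dt (UH UP : State D), Pstep P dt UH UP ->
  [/\ tot (UP c0) = tot (UH c0), tot (UP c1) = tot (UH c1),
      tot (UP c2) = tot (UH c2) & tot (UP c3) = tot (UH c3)].
Proof.
move=> hk hl hg hdx hvth hre dt UH UP
  [UHl [uH [ust [uP [mP [eH [est [eP [EP0 [EP1 [eUHl [hm [hE [hust [euP [hest [eeP
   [hmP [hEP0 [hefix eUP]]]]]]]]]]]]]]]]]]]].
have hinj : injective (lx D) by case: hl.
have hC : (dx D / 2) ^+ 2 * 4 != 0.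
  by rewrite mulf_neq0 // ?expf_neq0 // ?mulf_neq0 ?invr_eq0 ?gt_eqF ?pnatr_eq0.
have tl : forall c, tot (UHl c) = tot (UH c) by move=> c; rewrite eUHl tot_limit.
have tP : forall c, tot (UP c) = tot (mkState (UHl c0) mP.1 mP.2 EP1 c).
  by move=> c; rewrite eUP tot_limit.
set rho := UHl c0.
have m1 : ipGL mP.1 oneF = ipGL (UHl c1) oneF.
  have h1 := hmP (oneF, zF); rewrite /vipGL /vipGL3 /= ipGL_z ipGL3_z !addr0 in h1.
  have h2 := hust (oneF, zF).
  rewrite a_eps_1 a_lam_1 /vipGL3 /= !ipGL3_z !addr0 !mulr0 !addr0 in h2.
  have h3 := hm (oneF, zF); rewrite /vipGL /vipGL3 /= ipGL_z ipGL3_z !addr0 in h3.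
  by rewrite h1 h3 euP /= ipGL3_comb h2; ring.
have m2 : ipGL mP.2 oneF = ipGL (UHl c2) oneF.
  have h1 := hmP (zF, oneF); rewrite /vipGL /vipGL3 /= ipGL_z ipGL3_z !add0r in h1.
  have h2 := hust (zF, oneF).
  rewrite a_eps_2 a_lam_2 /vipGL3 /= !ipGL3_z !add0r !mulr0 !addr0 in h2.
  have h3 := hm (zF, oneF); rewrite /vipGL /vipGL3 /= ipGL_z ipGL3_z !add0r in h3.
  by rewrite h1 h3 euP /= ipGL3_comb h2; ring.
have nod : forall (f1 f2 u : VF D), (forall th, vipGL f1 th = vipGL3 rho u th) ->
  (forall i j a b, Wgl a b * evp f1.1 (nd i j a b) = Wgl a b * (evp rho (nd i j a b) * evp u.1 (nd i j a b))) /\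
  (forall i j a b, Wgl a b * evp f1.2 (nd i j a b) = Wgl a b * (evp rho (nd i j a b) * evp u.2 (nd i j a b))).
  move=> f1 f2 u h; split; apply: nodal => // chi.
    by have := h (chi, zF); rewrite /vipGL /vipGL3 /= ipGL_z ipGL3_z !addr0.
  by have := h (zF, chi); rewrite /vipGL /vipGL3 /= ipGL_z ipGL3_z !add0r.
have [nP1 nP2] := nod mP mP uP hmP.
have [nH1 nH2] := nod (UHl c1, UHl c2) mP uH hm.
have kinP : kinGL rho mP oneF = volGL (fun p => evp rho p * evp uP.1 p * evp uP.1 p / 2
    + evp rho p * evp uP.2 p * evp uP.2 p / 2).
  rewrite /kinGL; apply: volGL_w => i j a b; rewrite !evp_one !mulr1 !mulrDr.
  by rewrite (kin_pt (nP1 i j a b)) (kin_pt (nP2 i j a b)).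
have kinH : kinGL rho (UHl c1, UHl c2) oneF = volGL (fun p => evp rho p * evp uH.1 p * evp uH.1 p / 2
    + evp rho p * evp uH.2 p * evp uH.2 p / 2).
  rewrite /kinGL; apply: volGL_w => i j a b; rewrite !evp_one !mulr1 !mulrDr.
  by rewrite (kin_pt (nH1 i j a b)) (kin_pt (nH2 i j a b)).
have hKP : volGL (fun p => evp rho p * evp uP.1 p * evp uP.1 p / 2
    + evp rho p * evp uP.2 p * evp uP.2 p / 2) =
  volGL (fun p => evp rho p * evp uH.1 p * evp uH.1 p / 2
    + evp rho p * evp uH.2 p * evp uH.2 p / 2)
  + 2 * (vipGL3 rho ust ust - vipGL3 rho uH ust).
  rewrite /vipGL3 /ipGL3 -!volGLD -volGLB volGLZ -volGLD; apply: volGL_ext => p.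
  by rewrite euP /= !evp_comb; field.
have en : ipGL EP0 oneF = ipGL (UHl c3) oneF.
  rewrite hEP0 hE eeP ipGL3_comb kinP kinH hKP.
  have e3 := hest oneF; rewrite a_D_1 mulr0 addr0 in e3; rewrite e3.
  have e2 := hust ust; rewrite a_eps_b a_lam_b in e2; rewrite -e2.
  field; rewrite ?gt_eqF //.
have tt : forall f g : SF D, ipGL f oneF = ipGL g oneF -> tot f = tot g.
  by move=> f g; rewrite !(ipGL_tot hk hl hg) => /(mulfI hC).
split; rewrite tP -tl //=.
- exact: tt.
- exact: tt.
- by rewrite (efix_tot hg hdx hefix); apply: tt.
Qed.

End Aux.
Unset Implicit Arguments.
Set Strict Implicit.

Theorem theorem1 (R : rcfType) (D : disc R) (P : phys R) (dt : R)
    (Un UH UP Un1 : State D) :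
  (* discretisation: k >= 1, periodic uniform mesh of squares of side dx and
     diameter h, quadrature rules, 2L - 3 >= k *)
  (1 <= kd D)%N -> (0 < Nx D)%N -> (0 < Ny D)%N ->
  0 < dx D -> 0 < hd D -> hd D ^+ 2 = 2 * dx D ^+ 2 ->
  (kd D + 3 <= 2 * La D)%N ->
  gauss_rule (gx D) (gw D) -> gl_rule (lx D) (lw D) -> gl_rule (ax D) (aw D) ->
  (* parameters *)
  1 < gam P -> 0 < reyn P -> 0 < lamh P -> 0 < epsl P ->
  0 < vth P <= 1 -> 0 <= sig P -> 0 < sigt P -> 0 < dt ->
  (* one time step: (1) step (H); (2)-(4); (5) step (H) *)
  Hstep P dt Un UH ->
  Pstep P dt UH UP ->
  Hstep P dt UP Un1 ->
  (* U_h^P(x_q) in G for all x_q in S_h *)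
  (forall (i : 'I_(Nx D)) (j : 'I_(Ny D)) (q : R * R), q \in S_H D ->
      inG (Uval UP (Pt i j q.1 q.2))) ->
  (* conservation of density, momentum (componentwise) and total energy *)
  ipG (Un c0) oneF = ipG (Un1 c0) oneF /\
  (ipG (Un c1) oneF = ipG (Un1 c1) oneF /\ ipG (Un c2) oneF = ipG (Un1 c2) oneF) /\
  ipG (Un c3) oneF = ipG (Un1 c3) oneF.
  (* your proof *)
Proof.
move=> hk _ _ hdx _ _ _ hg hl _ _ hre _ _ /andP[hvth _] _ _ _ hH1 hP hH2 _.
have [p0 p1 p2 p3] := Pstep_tot hk hl hg hdx hvth hre hP.
have e : forall c, tot (Un1 c) = tot (UP c) /\ tot (UH c) = tot (Un c).
  by move=> c; split; apply: (Hstep_tot hg hdx); eassumption.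
rewrite !ipG_tot.
have [a0 b0] := e c0; have [a1 b1] := e c1; have [a2 b2] := e c2; have [a3 b3] := e c3.
by rewrite a0 a1 a2 a3 p0 p1 p2 p3 b0 b1 b2 b3.
Qed.
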